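(* Let $\mathcal{J}=\{0,1,\dots,f-1\}$ and let $B,B'\in M_{2^f}(\mathbb{F})$ be matrices with all entries nonzero, rows and columns indexed by the subsets of $\mathcal{J}$, each satisfying $B_{J_1,J_3}/B_{J_1,J_4}=B_{J_2,J_3}/B_{J_2,J_4}$ (resp. the same for $B'$) for all $J_1,J_2,J_3,J_4\subseteq\mathcal{J}$. If \[\frac{B_{J,\emptyset}}{B_{J^c,\emptyset}B_{J,J^c}}=\frac{B'_{J,\emptyset}}{B'_{J^c,\emptyset}B'_{J,J^c}}\quad\text{for all }J\subseteq\mathcal{J},\] then there is an invertible diagonal matrix $Q$ with $B'=Q^{-1}BQ$. That is, up to conjugation by diagonal matrices, $B$ is uniquely determined by the quantities $B_{J,\emptyset}/(B_{J^c,\emptyset}B_{J,J^c})$, $J\subseteq\mathcal{J}$.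
   Context: $\mathbb{F}$ is a finite field; $J^c$ denotes the complement of $J$ in $\mathcal{J}$. *)

(* Defs.v *)
From mathcomp Require Import all_boot all_order all_algebra all_field.
Set Implicit Arguments. Unset Strict Implicit. Unset Printing Implicit Defensive.
Import GRing.Theory.
Local Open Scope ring_scope.

(* Square matrices whose rows and columns are indexed by the subsets of
   J = {0,...,f-1}; the size is #|{set 'I_f}| = 2^f. *)
Definition subset_mx (F : fieldType) (f : nat) := 'M[F]_(#|{set 'I_f}|).

Definition sent (F : fieldType) (f : nat) (B : subset_mx F f)
  (J K : {set 'I_f}) : F := B (enum_rank J) (enum_rank K).

(* Main.v *)
Require Import Defs.
From mathcomp Require Import all_boot all_order all_algebra all_field.
From mathcomp Require Import ring.
Import GRing.Theory.
Local Open Scope ring_scope.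

Theorem lemma5p4 (F : finFieldType) (f : nat) (B B' : subset_mx F f) :
  (forall i j, B i j != 0) ->
  (forall i j, B' i j != 0) ->
  (forall J1 J2 J3 J4 : {set 'I_f},
      sent B J1 J3 / sent B J1 J4 = sent B J2 J3 / sent B J2 J4) ->
  (forall J1 J2 J3 J4 : {set 'I_f},
      sent B' J1 J3 / sent B' J1 J4 = sent B' J2 J3 / sent B' J2 J4) ->
  (forall J : {set 'I_f},
      sent B J set0 / (sent B (~: J) set0 * sent B J (~: J))
      = sent B' J set0 / (sent B' (~: J) set0 * sent B' J (~: J))) ->
  exists d : 'rV[F]_(#|{set 'I_f}|),
    (forall i, d 0 i != 0) /\
    B' = invmx (diag_mx d) *m B *m diag_mx d.
Proof.
move=> nzB nzB' H1 H2 H3.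
have hB : forall i1 i2 j3 j4, B i1 j3 / B i1 j4 = B i2 j3 / B i2 j4.
  move=> i1 i2 j3 j4.
  by have := H1 (enum_val i1) (enum_val i2) (enum_val j3) (enum_val j4); rewrite /sent !enum_valK.
have hB' : forall i1 i2 j3 j4, B' i1 j3 / B' i1 j4 = B' i2 j3 / B' i2 j4.
  move=> i1 i2 j3 j4.
  by have := H2 (enum_val i1) (enum_val i2) (enum_val j3) (enum_val j4); rewrite /sent !enum_valK.
set e0 := enum_rank (set0 : {set 'I_f}).
have inv1 : forall (M : subset_mx F f), (forall i j, M i j != 0) ->
    (forall i1 i2 j3 j4, M i1 j3 / M i1 j4 = M i2 j3 / M i2 j4) ->
    forall k, sent M (~: enum_val k) set0 / (sent M (~: ~: enum_val k) set0
        * sent M (~: enum_val k) (~: ~: enum_val k)) = (M k k)^-1.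
  move=> M nzM hM k; rewrite setCK /sent enum_valK.
  set J := enum_rank (~: enum_val k).
  have e : M J e0 = M k e0 / M k k * M J k.
    by rewrite -(hM J k e0 k) divfK.
  rewrite -/e0 e; field.
  by rewrite !nzM.
have diag : forall k, B k k = B' k k.
  move=> k; apply: invr_inj.
  by rewrite -(inv1 B nzB hB) -(inv1 B' nzB' hB') H3.
pose d := \row_i (B i e0 / B' i e0).
have nzd : forall i, d 0 i != 0.
  by move=> i; rewrite mxE mulf_neq0 // invr_eq0.
exists d; split => //.
have uD : diag_mx d \in unitmx.
  rewrite unitmxE det_diag unitfE; apply/prodf_neq0 => i _; exact: nzd.
have E : diag_mx d *m B' = B *m diag_mx d.
  rewrite mul_diag_mx mul_mx_diag; apply/matrixP => i j; rewrite !mxE.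
  have e1 : B i j = B j j / B j e0 * B i e0 by rewrite -(hB i j j e0) divfK.
  have e2 : B' i j = B' j j / B' j e0 * B' i e0 by rewrite -(hB' i j j e0) divfK.
  rewrite e1 e2 diag; field.
  by rewrite !nzB !nzB'.
by rewrite -mulmxA -E mulKmx.
Qed.
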